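(* Let a stabilizer code $H$ be phantom with respect to the logical basis $(Q_X,Q_Z)$. Then for every weight vector $\mathbf w\in\mathbb Z_{\ge0}^3$, the number $\#\{v\in cQ_X+\mathrm{rs}(H):\ \mathbf w(v)=\mathbf w\}$ is the same for all $c\in\mathbb F_2^k\setminus\{0\}$. The same holds with $Q_X$ replaced by $Q_Z$.
   Context: Conventions: arithmetic over $\mathbb F_2$; vectors are row vectors; $\mathrm{rs}(M)$ is the row space of $M$; $E_{ab}\in\mathbb F_2^{k\times k}$ is the matrix unit with a single $1$ in position $(a,b)$; $A^{-T}=(A^{-1})^T$; $\Omega=\begin{pmatrix}0&I_n\\ I_n&0\end{pmatrix}$. A stabilizer code on $n$ qubits is given by a full-row-rank $H\in\mathbb F_2^{r\times 2n}$ with $H\Omega H^T=0$; $k=n-r$. A vector $(x|z)\in\mathbb F_2^{2n}$ represents the Pauli operator $\prod_iX_i^{x_i}Z_i^{z_i}$ up to phase. A logical basis is a pair $Q_X,Q_Z\in\mathbb F_2^{k\times 2n}$ with $H\Omega Q_X^T=0$, $H\Omega Q_Z^T=0$, $Q_X\Omega Q_X^T=0$, $Q_Z\Omega Q_Z^T=0$, $Q_X\Omega Q_Z^T=I_k$. A qubit permutation $\pi\in S_n$ with permutation matrix $P$ acts by $(x|z)\mapsto(xP|zP)$, i.e. right multiplication by $P\oplus P=\mathrm{diag}(P,P)$. For $A\in GL(k,\mathbb F_2)$, $\pi$ implements the logical CNOT circuit $A$ in the basis $(Q_X,Q_Z)$ if $\mathrm{rs}(H(P\oplus P))=\mathrm{rs}(H)$,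 every row of $Q_X(P\oplus P)-AQ_X$ lies in $\mathrm{rs}(H)$, and every row of $Q_Z(P\oplus P)-A^{-T}Q_Z$ lies in $\mathrm{rs}(H)$. The logical $\mathrm{CNOT}_{ab}$ ($a\neq b$) corresponds to $A=I_k+E_{ab}$. The stabilizer code is phantom with respect to $(Q_X,Q_Z)$ if for every ordered pair $(a,b)\in[k]^2$ with $a\ne b$ some permutation implements $I_k+E_{ab}$ in that basis; it is phantom if it is phantom with respect to some logical basis. The weight vector of $v=(x|z)$ is $\mathbf w(v)=(w_X,w_Z,w_Y)$ with $w_X=\#\{i:x_i=1,z_i=0\}$, $w_Z=\#\{i:x_i=0,z_i=1\}$, $w_Y=\#\{i:x_i=z_i=1\}$. *)

(* Defs.v *)
From HB Require Import structures.
From mathcomp Require Import all_boot all_order all_algebra all_fingroup.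
Set Implicit Arguments. Unset Strict Implicit. Unset Printing Implicit Defensive.
Import GRing.Theory.
Local Open Scope ring_scope.

(* Binary field F_2. Vectors (x|z) in F_2^{2n} are row vectors 'rV_(n + n):
   x = lsubmx v, z = rsubmx v. *)
Notation F2 := 'F_2.

Definition Omega (n : nat) : 'M[F2]_(n + n) := block_mx 0 1%:M 1%:M 0.

Definition stab_code (n r : nat) (H : 'M[F2]_(r, n + n)) : Prop :=
  row_free H /\ H *m Omega n *m H^T = 0.

Definition logical_basis (n r k : nat) (H : 'M[F2]_(r, n + n))
  (QX QZ : 'M[F2]_(k, n + n)) : Prop :=
  [/\ H *m Omega n *m QX^T = 0, H *m Omega n *m QZ^T = 0,
      QX *m Omega n *m QX^T = 0, QZ *m Omega n *m QZ^T = 0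
    & QX *m Omega n *m QZ^T = 1%:M].

Definition perm2 (n : nat) (s : 'S_n) : 'M[F2]_(n + n) :=
  block_mx (perm_mx s) 0 0 (perm_mx s).

Definition implements (n r k : nat) (H : 'M[F2]_(r, n + n))
  (QX QZ : 'M[F2]_(k, n + n)) (s : 'S_n) (A : 'M[F2]_k) : Prop :=
  [/\ (H *m perm2 s == H)%MS,
      (QX *m perm2 s - A *m QX <= H)%MS
    & (QZ *m perm2 s - (invmx A)^T *m QZ <= H)%MS].

Definition cnot_mx (k : nat) (a b : 'I_k) : 'M[F2]_k := 1%:M + delta_mx a b.

Definition phantom_wrt (n r k : nat) (H : 'M[F2]_(r, n + n))
  (QX QZ : 'M[F2]_(k, n + n)) : Prop :=
  forall a b : 'I_k, a != b -> exists s : 'S_n, implements H QX QZ s (cnot_mx a b).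

(* weight vector (w_X, w_Z, w_Y) of v = (x|z) *)
Definition wvec (n : nat) (v : 'rV[F2]_(n + n)) : nat * nat * nat :=
  (#|[set i : 'I_n | (lsubmx v 0 i == 1) && (rsubmx v 0 i == 0)]|,
   #|[set i : 'I_n | (lsubmx v 0 i == 0) && (rsubmx v 0 i == 1)]|,
   #|[set i : 'I_n | (lsubmx v 0 i == 1) && (rsubmx v 0 i == 1)]|).

Definition coset_count (n r k : nat) (H : 'M[F2]_(r, n + n))
  (Q : 'M[F2]_(k, n + n)) (c : 'rV[F2]_k) (w : nat * nat * nat) : nat :=
  #|[set v : 'rV[F2]_(n + n) | ((v - c *m Q) <= H)%MS && (wvec v == w)]|.

(* Main.v *)
Require Import Defs.
From HB Require Import structures.
From mathcomp Require Import all_boot all_order all_algebra all_fingroup.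
Import GRing.Theory.
Local Open Scope ring_scope.
Section Helpers.
Local Set Implicit Arguments.
Local Unset Strict Implicit.
Lemma F2_cases (x : F2) : x = 0 \/ x = 1.
Proof. case: x => [[|[|m]] Hm]; [left|right|]; try by apply/val_inj. by []. Qed.
Lemma F2_dbl (x : F2) : x + x = 0.
Proof. by case: (F2_cases x) => ->; apply/val_inj. Qed.

Lemma cnot_invol k (a b : 'I_k) : a != b -> cnot_mx a b *m cnot_mx a b = 1%:M.
Proof.
move=> ab; rewrite /cnot_mx mulmxDl !mulmxDr !mul1mx mulmx1 mul_delta_mx_0 ?addr0 //.
rewrite -addrA; apply/matrixP => i j; rewrite !mxE F2_dbl addr0 //.
by rewrite eq_sym.
Qed.


Lemma cnot_tr k (a b : 'I_k) : (cnot_mx a b)^T = cnot_mx b a.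
Proof. by rewrite /cnot_mx linearD /= trmx1 trmx_delta. Qed.

Lemma cnot_inv k (a b : 'I_k) : a != b -> invmx (cnot_mx a b) = cnot_mx a b.
Proof.
move=> ab; have h := cnot_invol ab.
have u : cnot_mx a b \in unitmx by case/mulmx1_unit: h.
by rewrite -[LHS]mulmx1 -h mulmxA mulVmx // mul1mx.
Qed.

Lemma perm2_l n (s : 'S_n) (v : 'rV[F2]_(n + n)) :
  lsubmx (v *m perm2 s) = lsubmx v *m perm_mx s /\
  rsubmx (v *m perm2 s) = rsubmx v *m perm_mx s.
Proof.
rewrite -{1 3}(hsubmxK v) /perm2 mul_row_block !mulmx0 addr0 add0r.
by rewrite row_mxKl row_mxKr.
Qed.

Lemma perm_entry n (s : 'S_n) (x : 'rV[F2]_n) j : (x *m perm_mx s) 0 j = x 0 (s^-1%g j).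
Proof. by rewrite -[s]invgK -col_permE mxE invgK. Qed.

Lemma wvec_perm n (s : 'S_n) (v : 'rV[F2]_(n + n)) : wvec (v *m perm2 s) = wvec v.
Proof.
rewrite /wvec; case: (perm2_l s v) => -> ->.
have E : forall P : F2 -> F2 -> bool,
  #|[set i | P ((lsubmx v *m perm_mx s) 0 i) ((rsubmx v *m perm_mx s) 0 i)]| =
  #|[set i | P (lsubmx v 0 i) (rsubmx v 0 i)]|.
  move=> P; rewrite -[RHS](card_preimset _ (@perm_inj _ (s^-1)%g)); apply: eq_card => i.
  by rewrite !inE !perm_entry.
by rewrite (E (fun x z => (x == 1) && (z == 0))) (E (fun x z => (x == 0) && (z == 1)))
  (E (fun x z => (x == 1) && (z == 1))).
Qed.

Lemma perm2_inj n (s : 'S_n) : injective (fun v : 'rV[F2]_(n + n) => v *m perm2 s).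
Proof.
have h : perm2 s *m perm2 (s^-1)%g = 1%:M.
  by rewrite /perm2 mulmx_block !mulmx0 !mul0mx !addr0 !add0r -perm_mxM mulgV perm_mx1 -scalar_mx_block.
move=> u v /= e; by rewrite -[u]mulmx1 -[v]mulmx1 -h !mulmxA e.
Qed.

Lemma count_le n r k (H : 'M[F2]_(r, n + n)) (Q : 'M[F2]_(k, n + n)) (s : 'S_n) B c w :
  (H *m perm2 s <= H)%MS -> (Q *m perm2 s - B *m Q <= H)%MS ->
  (coset_count H Q c w <= coset_count H Q (c *m B) w)%N.
Proof.
move=> hH hQ; rewrite /coset_count -(card_imset _ (@perm2_inj n s)).
apply: subset_leq_card; apply/subsetP => u /imsetP [v]; rewrite !inE => /andP [hv hw] ->.
rewrite wvec_perm hw andbT.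
have -> : v *m perm2 s - c *m B *m Q = (v - c *m Q) *m perm2 s + c *m (Q *m perm2 s - B *m Q).
  by rewrite mulmxBl mulmxBr !mulmxA addrA subrK.
rewrite addmx_sub //; last exact: submx_trans (submxMl _ _) hQ.
  exact: submx_trans (submxMr _ hv) hH.
Qed.

Lemma count_eq n r k (H : 'M[F2]_(r, n + n)) (Q : 'M[F2]_(k, n + n)) (s : 'S_n) B c w :
  (H *m perm2 s <= H)%MS -> (Q *m perm2 s - B *m Q <= H)%MS -> B *m B = 1%:M ->
  coset_count H Q (c *m B) w = coset_count H Q c w.
Proof.
move=> hH hQ hB; apply/eqP; rewrite eqn_leq (count_le _ _ hH hQ).
by rewrite -{2}(mulmx1 c) -hB mulmxA (count_le _ _ hH hQ).
Qed.

Lemma cnot_entry k (a b : 'I_k) (c : 'rV[F2]_k) j :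
  (c *m cnot_mx a b) 0 j = c 0 j + c 0 a * (j == b)%:R.
Proof.
rewrite /cnot_mx mulmxDr mulmx1 mxE; congr (_ + _).
rewrite mxE (bigD1 a) //= mxE eqxx /= big1 ?addr0 // => i /negbTE ne.
by rewrite mxE ne mulr0.
Qed.

Lemma orbit_const k (f : 'rV[F2]_k -> nat) :
  (forall a b c, a != b -> f (c *m cnot_mx a b) = f c) ->
  forall c1 c2, c1 != 0 -> c2 != 0 -> f c1 = f c2.
Proof.
move=> hf.
have step1 : forall (a : 'I_k) (m : nat) (c : 'rV[F2]_k), #|[set j | (j != a) && (c 0 j == 1)]| = m -> c 0 a = 1 ->
    f c = f (delta_mx 0 a).
  move=> a m; elim: m => [|m IH] c hm ha.
    congr f; apply/matrixP => i j; rewrite (ord1 i) mxE eqxx /=.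
    case: (eqVneq j a) => [->|ja] //=.
    have /setP/(_ j) := cards0_eq hm; rewrite !inE ja /=.
    by case: (F2_cases (c 0 j)) => -> //; rewrite eqxx.
  have : (0 < m.+1)%N by []. rewrite -hm.
  case/card_gt0P => b hb; move: (hb); rewrite inE => /andP [ba cb].
  have ab : a != b by rewrite eq_sym.
  rewrite -(hf a b c ab); apply: IH; last by rewrite cnot_entry ha (negbTE ab) mulr0 addr0.
  have -> : [set j | (j != a) && ((c *m cnot_mx a b) 0 j == 1)] =
            [set j | (j != a) && (c 0 j == 1)] :\ b.
    apply/setP => j; rewrite !inE cnot_entry ha mul1r.
    case: (eqVneq j b) => [->|jb] /=; last by rewrite addr0.
    by rewrite (eqP cb) F2_dbl ba.
  by move: hm; rewrite (cardsD1 b) hb add1n => -[].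
have ex1 : forall c : 'rV[F2]_k, c != 0 -> exists a, c 0 a = 1.
  move=> c hc; case: (pickP (fun a => c 0 a == 1)) => [a /eqP|h0]; first by exists a.
  case/eqP: hc; apply/matrixP => i j; rewrite (ord1 i) mxE; have := h0 j.
  by case: (F2_cases (c 0 j)) => -> //; rewrite eqxx.
move=> c1 c2 h1 h2; case: (ex1 _ h1) => a1 e1; case: (ex1 _ h2) => a2 e2.
rewrite (step1 a1 _ c1 erefl e1) (step1 a2 _ c2 erefl e2).
case: (eqVneq a1 a2) => [->//|ne].
pose d : 'rV[F2]_k := delta_mx 0 a1 + delta_mx 0 a2.
rewrite -(step1 a1 _ d erefl) -?(step1 a2 _ d erefl) //; rewrite /d !mxE !eqxx /=.
  by rewrite eq_sym (negbTE ne) add0r.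
by rewrite (negbTE ne) addr0.
Qed.
End Helpers.

Theorem mainTheorem3 (n r k : nat) (H : 'M[F2]_(r, n + n))
  (QX QZ : 'M[F2]_(k, n + n)) :
  stab_code H -> k = (n - r)%N -> logical_basis H QX QZ ->
  phantom_wrt H QX QZ ->
  forall w : nat * nat * nat, forall c1 c2 : 'rV[F2]_k,
    c1 != 0 -> c2 != 0 ->
    coset_count H QX c1 w = coset_count H QX c2 w /\
    coset_count H QZ c1 w = coset_count H QZ c2 w.
Proof.
move=> _ _ _ hph w c1 c2 h1 h2; split.
  apply: (orbit_const (f := fun c => coset_count H QX c w)) h1 h2 => a b c ab.
  case: (hph a b ab) => s [/andP [hH _] hX _].
  exact: count_eq hH hX (cnot_invol ab).
apply: (orbit_const (f := fun c => coset_count H QZ c w)) h1 h2 => a b c ab.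
have ba : b != a by rewrite eq_sym.
case: (hph b a ba) => s [/andP [hH _] _ hZ].
rewrite cnot_inv // cnot_tr in hZ.
exact: count_eq hH hZ (cnot_invol ab).
Qed.
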